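(* Fix integers $k,l\geq 2$, $m\ge 1$, $a\in\mathbb{Z}$, a polynomial $R(x_1,\dots,x_m)\in\mathbb{Z}[x_1,\dots,x_m]$, and integers $0\le s\le r$ with $r\ge1$. Let $P(x)=(x-a)^e\prod_{j=1}^t P_j(x)^{e_j}\in\mathbb{Z}[x]$ with $e\geq1$, $e_j\ge1$, where $P_1,\dots,P_t\in\mathbb{Z}[x]$ are distinct irreducible polynomials. Then the equation $$P(x)=\prod_{i=1}^s n_i!\cdot\prod_{i=s+1}^r n_i!!$$ has only finitely many solutions $(n_1,\dots,n_r,x)$ with $n_1,\dots,n_r$ positive integers and $x\in S_{a,R}$.
   Context: For a positive integer $x=\prod_{i\in I}p_i^{\alpha_i}$, $K(x)=\max_{i\in I}\alpha_i$ (with $K(1)=0$) and $\omega(x)=|I|$. $\mathcal{F}_k=\{x\in\mathbb{N}: K(x)<k\}$, $\mathcal{P}_l=\{x\in\mathbb{N}:\omega(x)<l\}$, and $\mathcal{F}_k\mathcal{P}_l=\{yz: y\in\mathcal{F}_k, z\in\mathcal{P}_l\}$. $S_{a,R}=\{x_1\cdots x_m\cdot R(x_1,\dots,x_m)+a : x_1,\dots,x_m\in\mathcal{F}_k\mathcal{P}_l\}$. $n!!$ is the double factorial. *)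

(* Defs.v *)
From HB Require Import structures.
From mathcomp Require Import all_boot all_order all_algebra.
From mathcomp Require Import mpoly.
Set Implicit Arguments. Unset Strict Implicit. Unset Printing Implicit Defensive.
Import Order.TTheory GRing.Theory Num.Theory.

Definition Kexp (x : nat) : nat := \max_(p <- primes x) logn p x.
Definition omega (x : nat) : nat := size (primes x).

Definition inF (k x : nat) : Prop := 0 < x /\ Kexp x < k.
Definition inP (l x : nat) : Prop := 0 < x /\ omega x < l.
Definition inFP (k l x : nat) : Prop :=
  exists y z, inF k y /\ inP l z /\ x = y * z.

Definition inS (k l m : nat) (a : int) (R : {mpoly int[m]}) (x : int) : Prop :=
  exists v : 'I_m -> nat, (forall i, inFP k l (v i)) /\
    x = ((\prod_(i < m) (v i)%:Z) * R.@[fun i => (v i)%:Z] + a)%R.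

Fixpoint dfact (n : nat) : nat :=
  match n with
  | 0 => 1
  | 1 => 1
  | (n'.+2) as n0 => n0 * dfact n'
  end.

Definition irreducible_Zx (p : {poly int}) : Prop :=
  p != 0%R /\ p \isn't a GRing.unit /\
  forall q r : {poly int}, p = (q * r)%R -> q \is a GRing.unit \/ r \is a GRing.unit.

(* Main.v *)
Require Import Defs.
From HB Require Import structures.
From mathcomp Require Import all_boot all_order all_algebra.
From mathcomp Require Import mpoly.
From mathcomp Require Import zify ring lra.
Import Order.TTheory GRing.Theory Num.Theory.

Lemma prime_dvd_fact p n : prime p -> p %| n`! -> p <= n.
Proof.
move=> pp; elim: n => [|n IH]; first by rewrite /= Euclid_dvd1.
rewrite factS Euclid_dvdM // => /orP[H|H].
  exact: dvdn_leq H.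
by apply: leq_trans (IH H) _.
Qed.

Lemma legendre_bound p n : prime p -> p.-1 * logn p n`! <= n.
Proof.
move=> pp; rewrite logn_fact //.
have p0 : 0 < p := prime_gt0 pp.
suff H : forall j, p.-1 * (\sum_(1 <= k < j.+1) n %/ p ^ k) + n %/ p ^ j <= n.
  by apply: leq_trans (H n); apply: leq_addr.
elim=> [|j IH]; first by rewrite big_geq // muln0 expn0 divn1.
rewrite big_nat_recr //= mulnDr.
have Ht : n %/ p ^ j.+1 * p <= n %/ p ^ j.
  by rewrite expnSr divnMA leq_trunc_div.
move: IH Ht; set S := \sum_(1 <= k < j.+1) _; set t := n %/ p ^ j.+1;
  set u := n %/ p ^ j => IH Ht.
have -> : p.-1 * S + p.-1 * t + t = p.-1 * S + t * p.
  by rewrite -[in t * p](prednK p0) mulnS; lia.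
lia.
Qed.

Lemma pow_logn_fact p n : prime p -> p ^ logn p n`! <= 2 ^ n.
Proof.
move=> pp; have p0 : 0 < p := prime_gt0 pp.
have H1 : p <= 2 ^ p.-1 by rewrite -{1}(prednK p0) ltn_expl.
apply: (@leq_trans ((2 ^ p.-1) ^ logn p n`!)).
  by case: (logn p n`!) => [|L]; rewrite ?expn0 // leq_exp2r.
by rewrite -expnM leq_pexp2l // legendre_bound.
Qed.

Lemma bin_pair n m : 'C(n, m) + 'C(n, m.+1) <= 2 ^ n.
Proof.
elim: n m => [|n IH] [|m] //.
  rewrite bin0 binS bin0 expnS mul2n -addnn.
  have := IH 0; rewrite bin0 => H; lia.
rewrite !binS expnS mul2n -addnn.
have := IH m; have := IH m.+1; lia.
Qed.

Lemma bin_mid m : 'C(m.*2.+1, m) <= 4 ^ m.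
Proof.
have H := bin_pair m.*2.+1 m.
have E : 'C(m.*2.+1, m.+1) = 'C(m.*2.+1, m).
  rewrite -bin_sub; last by rewrite -addnn; lia.
  by congr 'C(_, _); rewrite -addnn; lia.
rewrite E expnS in H.
have -> : 4 ^ m = 2 ^ m.*2 by rewrite -mul2n expnM.
move: H; set c := 'C(_, _); set d := 2 ^ _; lia.
Qed.

Definition prim N := \prod_(0 <= p < N.+1 | prime p) p.

Lemma prod_dvd_cond (I : Type) (s : seq I) (P : pred I) (g h : I -> nat) :
  (forall i, g i %| h i) -> \prod_(i <- s | P i) g i %| \prod_(i <- s) h i.
Proof.
move=> H; rewrite big_mkcond /=.
apply: (big_ind2 (fun a b => a %| b)) => //.
  by move=> ? ? ? ? ? ?; apply: dvdn_mul.
by move=> i _; case: (P i) => //; apply: dvd1n.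
Qed.

Lemma coprime_prod_l (I : Type) (s : seq I) (P : pred I) (g : I -> nat) m :
  (forall i, P i -> coprime (g i) m) -> coprime (\prod_(i <- s | P i) g i) m.
Proof.
move=> H; apply: (big_ind (fun a => coprime a m)) => //.
  exact: coprime1n.
by move=> a b Ha Hb; rewrite coprimeMl Ha Hb.
Qed.

Lemma mid_dvd m :
  \prod_(m.+2 <= p < m.*2.+2 | prime p) p %| 'C(m.*2.+1, m).
Proof.
set Q := \prod_(_ <= p < _ | _) _.
have Hf : Q %| (m.*2.+1)`!.
  rewrite (fact_split (_ : m.+1 <= m.*2.+1)); last by lia.
  apply: dvdn_mull; exact: prod_dvd_cond.
have Hc : coprime Q (m`! * (m.*2.+1 - m)`!).
  rewrite coprimeMr; apply/andP; split; rewrite /Q big_nat_cond;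
  apply: coprime_prod_l => p /andP[Hr pp];
  rewrite prime_coprime //; apply/negP => /(prime_dvd_fact _ _ pp); lia.
rewrite -(Gauss_dvdl _ Hc) bin_fact //; lia.
Qed.

Lemma prim_bound N : prim N <= 4 ^ N.
Proof.
elim: N {-2}N (leqnn N) => [|K IH] N HN.
  by move: HN; rewrite leqn0 => /eqP ->; rewrite /prim big_mkcond big_nat1.
case: (leqP N K) => HNK; first exact: IH.
have -> : N = K.+1 by lia.
case: (boolP (prime K.+1)) => pK; last first.
  rewrite /prim big_mkcond big_nat_recr //= -big_mkcond (negPf pK) muln1.
  by apply: leq_trans (IH K (leqnn K)) _; rewrite leq_exp2l.
case: (even_prime pK) => [E|oK].
  by rewrite E /prim big_mkcond !big_nat_recr //= big_geq.
have [m Em] : exists m, K.+1 = m.*2.+1.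
  exists K./2; rewrite -[in LHS](odd_double_half K.+1) oK /=; congr (_.+1).
  by rewrite uphalf_half; move: oK => /= /negPf ->.
have m0 : 0 < m by case: m Em => // Em; move: pK; rewrite Em.
have EmK : K = m + m by move: Em; rewrite -addnn; case.
rewrite Em /prim (@big_cat_nat _ _ _ m.+2) //=; last by lia.
have H1 := IH m.+1 (_ : m.+1 <= K); have H2 := mid_dvd m.
have H3 := bin_mid m.
have Hb : 0 < 'C(m.*2.+1, m) by rewrite bin_gt0; lia.
have H4 := dvdn_leq Hb H2.
rewrite -/(prim m.+1).
apply: leq_trans (leq_mul (H1 _) (leq_trans H4 H3)) _; first by lia.
by rewrite -expnD leq_exp2l //; lia.
Qed.

Lemma prodnX (I : Type) (s : seq I) (P : pred I) (F : I -> nat) e :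
  \prod_(i <- s | P i) F i ^ e = (\prod_(i <- s | P i) F i) ^ e.
Proof.
elim: e => [|e IH]; first by rewrite expn0 big1.
by rewrite expnS -IH -big_split /=; apply: eq_bigr => i _; rewrite expnS.
Qed.

Lemma prod_const_seq (I : Type) (s : seq I) c : \prod_(i <- s) c = c ^ size s.
Proof. by elim: s => [|x s IH]; rewrite ?big_nil ?big_cons ?IH ?expnS. Qed.

Lemma leq_expl m n e : m <= n -> m ^ e <= n ^ e.
Proof. by move=> H; elim: e => // e IH; rewrite !expnS leq_mul. Qed.

Lemma decomp_primes y : 0 < y -> y = \prod_(p <- primes y) p ^ logn p y.
Proof.
by move=> y0; rewrite {1}(prod_prime_decomp y0) prime_decompE big_map.
Qed.

Lemma y_bound N y k : 0 < y -> (forall p, p \in primes y -> p <= N) ->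
  Kexp y < k -> y <= (4 ^ N) ^ k.-1.
Proof.
move=> y0 HN Hk.
apply: (@leq_trans ((\prod_(p <- primes y) p) ^ k.-1)).
  rewrite {1}(@decomp_primes y y0) -prodnX big_seq_cond [X in _ <= X]big_seq_cond.
  apply: leq_prod => p /andP[Hp _]; rewrite leq_pexp2l //.
    by move: Hp; rewrite mem_primes => /andP[/prime_gt0].
  have : logn p y <= Kexp y by rewrite /Kexp; exact: (@leq_bigmax_seq _ _ xpredT (fun p => logn p y) p Hp).
  lia.
apply: leq_expl; apply: leq_trans (prim_bound N).
have Hperm : perm_eq (primes y) [seq p <- index_iota 0 N.+1 | p \in primes y].
  apply: uniq_perm; first exact: primes_uniq.
    by rewrite filter_uniq // iota_uniq.
  move=> p; rewrite mem_filter mem_index_iota; case Hp: (p \in primes y) => //=.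
  by have := HN _ Hp; lia.
rewrite (perm_big _ Hperm) big_filter /prim.
rewrite big_mkcond [X in _ <= X]big_mkcond; apply: leq_prod => p _.
case Hp: (p \in primes y).
  by move: Hp; rewrite mem_primes => /andP[-> _].
by case: ifP => // /prime_gt0.
Qed.

Lemma z_bound F z l B : 0 < F -> (forall p, prime p -> p ^ logn p F <= 2 ^ B) ->
  z %| F -> 0 < z -> omega z < l -> z <= (2 ^ B) ^ l.-1.
Proof.
move=> F0 HB zF z0 Hl.
rewrite {1}(@decomp_primes z z0).
apply: (@leq_trans (\prod_(p <- primes z) 2 ^ B)).
  rewrite big_seq_cond [X in _ <= X]big_seq_cond.
  apply: leq_prod => p /andP[Hp _].
  move: Hp; rewrite mem_primes => /andP[pp _].
  apply: leq_trans (HB p pp); rewrite leq_pexp2l ?prime_gt0 //.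
  exact: dvdn_leq_log.
rewrite prod_const_seq leq_pexp2l ?expn_gt0 //.
move: Hl; rewrite /omega; lia.
Qed.

Lemma dfact_mul n : dfact n.+1 * dfact n = n.+1`!.
Proof.
elim: n => [|n IH] //.
rewrite [dfact n.+2]/= -mulnA [dfact n * _]mulnC IH.
by rewrite [in RHS]factS.
Qed.

Lemma dfact_dvd n : dfact n %| n`!.
Proof. by case: n => // n; rewrite -dfact_mul dvdn_mulr. Qed.

Lemma dfact_gt0 n : 0 < dfact n.
Proof. by have := dfact_dvd n; case: (dfact n) => //; rewrite dvd0n gtn_eqF ?fact_gt0. Qed.

Lemma dfact_lower n : (n./2)`! <= dfact n.
Proof.
suff H : forall n, (n./2)`! <= dfact n /\ (n.+1./2)`! <= dfact n.+1 by case: (H n).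
elim=> [|m [IH1 IH2]] //; split => //.
rewrite [dfact m.+2]/= /= factS; apply: leq_mul => //; lia.
Qed.

Lemma fact_lower n : (n./2)`! <= n`!.
Proof. apply: leq_trans (dfact_lower n) _; apply: dvdn_leq (fact_gt0 _) (dfact_dvd n). Qed.

Lemma fact_pow a t : a ^ t <= (a + t)`!.
Proof.
elim: t => [|t IH]; first by rewrite expn0 fact_gt0.
by rewrite addnS factS expnS leq_mul //; lia.
Qed.

Lemma fact_grow D E : exists J, forall j, j`! <= D * E ^ j -> j <= J.
Proof.
exists ((E.+1).*2 + D * E.+1 ^ (E.+1).*2) => j Hj.
rewrite leqNgt; apply/negP => Hlt.
set a := (E.+1).*2 in Hlt.
set t := j - a.
have Ej : j = a + t by rewrite /t; lia.
have H1 := fact_pow a t; rewrite -Ej in H1.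
have H2 : D * E ^ j <= D * E.+1 ^ a * E.+1 ^ t.
  by rewrite -mulnA -expnD -Ej leq_mul // leq_expl.
have H3 : a ^ t = 2 ^ t * E.+1 ^ t by rewrite /a -mul2n expnMn.
have H4 : D * E.+1 ^ a < 2 ^ t.
  apply: leq_trans (ltn_expl t (ltnSn 1)); rewrite /t; lia.
have H5 : 0 < E.+1 ^ t by rewrite expn_gt0.
have : D * E.+1 ^ a * E.+1 ^ t < 2 ^ t * E.+1 ^ t by rewrite ltn_pmul2r.
lia.
Qed.
Section PolyBounds.
Local Open Scope ring_scope.

Lemma poly_bound (p : {poly int}) (x : int) :
  `|p.[x]| <= (\sum_(i < size p) `|p`_i|) * (`|x| + 1) ^+ size p.
Proof.
rewrite horner_coef mulr_suml; apply: le_trans (ler_norm_sum _ _ _) _.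
apply: ler_sum => i _; rewrite normrM normrX; apply: ler_wpM2l => //.
apply: (@le_trans _ _ ((`|x| + 1) ^+ i)).
  by apply: lerXn2r; rewrite ?nnegrE ?addr_ge0 // lerDl.
apply: ler_weXn2l; first by rewrite lerDr.
exact: ltnW (ltn_ord i).
Qed.

Lemma mpoly_bound (m : nat) (R : {mpoly int[m]}) (w : 'I_m -> nat) :
  (forall i, (0 < w i)%N) ->
  `|R.@[fun i => (w i)%:Z]| <= (\sum_(mm <- msupp R) `|R@_mm|) *
     ((\prod_i w i)%N%:Z) ^+ (\sum_(mm <- msupp R) \sum_i mm i)%N.
Proof.
move=> w0; rewrite mevalE big_seq [in X in _ <= X * _]big_seq mulr_suml; apply: le_trans (ler_norm_sum _ _ _) _.
apply: ler_sum => mm Hmm; rewrite normrM; apply: ler_wpM2l => //.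
rewrite normr_prod (big_morph Posz PoszM (erefl 1%:Z)) -prodrXl.
apply: ler_prod => i _; rewrite normr_ge0 /= normrX.
apply: ler_weXn2l; first by rewrite ger0_norm // lez_nat w0.
apply: (@leq_trans (\sum_j mm j)%N).
  by rewrite (bigD1 i) //= leq_addr.
by rewrite (big_rem mm Hmm) /= leq_addr.
Qed.

End PolyBounds.

Lemma fact_dvd m n : m <= n -> m`! %| n`!.
Proof. by move=> H; rewrite (fact_split H) dvdn_mulr. Qed.

Lemma prod_const_ord r c : \prod_(i < r) c = c ^ r.
Proof. by rewrite big_const_ord; elim: r => // r IH; rewrite iterS IH expnS. Qed.

Lemma growth2 D E : exists N0, forall N, (N./2)`! <= D * E ^ N -> N <= N0.
Proof.
have [J HJ] := fact_grow (D * E.+1) (E.+1 ^ 2).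
exists (J.*2.+1) => N HN.
suff : N./2 <= J by move=> H; rewrite -[N]odd_double_half; case: (odd N); lia.
apply: HJ; apply: leq_trans HN _.
apply: (@leq_trans (D * E.+1 ^ N)); first by rewrite leq_mul // leq_expl.
rewrite -mulnA leq_mul // -expnM -expnS leq_pexp2l //.
by rewrite -[N in N <= _]odd_double_half -mul2n; case: (odd N); lia.
Qed.

Lemma int_window (d : int) (B : nat) : (`|d| <= B)%N ->
  (absz (d + B%:Z)%R < B.*2.+1)%N /\ d = (Posz (absz (d + B%:Z)%R) - Posz B)%R.
Proof. move=> H; split; lia. Qed.

Lemma x1_bound (x a s y : int) : (1 <= y)%R -> (0 <= s)%R ->
  (`|x| <= s * y + `|a|)%R -> (`|x| + 1 <= (s + `|a| + 1) * y)%R.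
Proof. move=> H1 H2 H3; have := normr_ge0 a; nra. Qed.

Lemma dvd_prod_cond (I : finType) (P : pred I) (f : I -> nat) i0 :
  P i0 -> f i0 %| \prod_(i | P i) f i.
Proof. by move=> H; rewrite (bigD1 i0) //= dvdn_mulr. Qed.

Theorem theorem5 (k l m : nat) (a : int) (R : {mpoly int[m]}) (s r : nat)
  (e t : nat) (Pj : 'I_t -> {poly int}) (ej : 'I_t -> nat) :
  (2 <= k)%N -> (2 <= l)%N -> (1 <= m)%N ->
  (s <= r)%N -> (1 <= r)%N ->
  (1 <= e)%N -> (forall j, 1 <= ej j)%N ->
  (forall j, irreducible_Zx (Pj j)) -> injective Pj ->
  let P : {poly int} :=
    (('X - a%:P) ^+ e * \prod_(j < t) (Pj j) ^+ (ej j))%R in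
  exists sols : seq ({ffun 'I_r -> nat} * int),
    forall (n : {ffun 'I_r -> nat}) (x : int),
      (forall i, 0 < n i)%N ->
      inS k l a R x ->
      (P.[x])%R = Posz (\prod_(i < r | (i < s)%N) (n i)`! *
                \prod_(i < r | (s <= i)%N) dfact (n i))%N ->
      (n, x) \in sols.
Proof.
move=> hk hl hm hsr hr he hej hirr hinj P.
set SP : int := (\sum_(i < size P) `|P`_i|)%R.
set dP := size P.
set SR : int := (\sum_(mm <- msupp R) `|R@_mm|)%R.
set T := (\sum_(mm <- msupp R) \sum_i mm i)%N.
set C1 : int := (SR + `|a| + 1)%R.
set K := (T.+1 * dP)%N.
set Cn : nat := absz (SP * C1 ^+ dP)%R.
set E := ((4 ^ k.-1 * 2 ^ (2 * r * l.-1)) ^ (m * K))%N.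
have [N0 HN0] := growth2 Cn E.
set XB := (N0`! ^ (2 * r))%N.
set fs := map (fun g : {ffun 'I_r -> 'I_N0.+1} =>
  ([ffun i => nat_of_ord (g i)] : {ffun 'I_r -> nat})) (enum {ffun 'I_r -> 'I_N0.+1}).
set xs := [seq (a + (Posz i - Posz XB))%R | i <- iota 0 XB.*2.+1].
exists [seq (f, y) | f <- fs, y <- xs].
move=> n x hn [v [hv Ex]] Heq.
set Mp := (\prod_(i < r | (i < s)%N) (n i)`! * \prod_(i < r | (s <= i)%N) dfact (n i))%N in Heq.
set N := \max_(i < r) n i.
have [i0 Ei0] : {i0 : 'I_r | N = n i0}.
  by apply: bigop.eq_bigmax; rewrite card_ord.
have HnN : forall i, n i <= N by move=> i; exact: leq_bigmax.
have Mp0 : 0 < Mp.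
  by rewrite muln_gt0; apply/andP; split; apply: prodn_gt0 => i;
    rewrite ?fact_gt0 ?dfact_gt0.
have Hlow : (N./2)`! <= Mp.
  rewrite Ei0; case: (ltnP i0 s) => Hi0.
    apply: leq_trans (fact_lower _) _; apply: dvdn_leq Mp0 _.
    by apply: dvdn_mulr; exact: (@dvd_prod_cond _ (fun i : 'I_r => (i < s)) (fun i => (n i)`!) i0 Hi0).
  apply: leq_trans (dfact_lower _) _; apply: dvdn_leq Mp0 _.
  by apply: dvdn_mull; exact: (@dvd_prod_cond _ (fun i : 'I_r => (s <= i)) (fun i => dfact (n i)) i0 Hi0).
set F := (N`! ^ (2 * r))%N.
have MpF : Mp %| F.
  have -> : F = ((\prod_(i < r) N`!) * (\prod_(i < r) N`!))%N.
    by rewrite prod_const_ord -expnD addnn -mul2n.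
  apply: dvdn_mul; apply: prod_dvd_cond => i.
    exact: fact_dvd _ _ (HnN i).
  exact: dvdn_trans (dfact_dvd _) (fact_dvd _ _ (HnN i)).
have F0 : 0 < F by rewrite expn_gt0 fact_gt0.
have HFp : forall p, prime p -> p %| F -> p <= N.
  move=> p pp; rewrite Euclid_dvdX // => /andP[H _].
  exact: prime_dvd_fact pp H.
have HFlog : forall p, prime p -> (p ^ logn p F <= 2 ^ (N * (2 * r)))%N.
  move=> p pp; rewrite lognX mulnC expnM [in X in _ <= X]expnM leq_expl //.
  exact: pow_logn_fact.
set V := (\prod_i v i)%N.
have EV : (\prod_i (v i)%:Z = V%:Z)%R.
  by rewrite /V (big_morph Posz PoszM (erefl (Posz 1))).
have v0 : forall i, 0 < v i.
  by move=> i; have [y [z [[y0 _] [[z0 _] ->]]]] := hv i; rewrite muln_gt0 y0 z0.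
have V0 : 0 < V by apply: prodn_gt0.
have HxP : (absz (x - a) %| Mp)%N.
  have -> : Mp = absz (P.[x])%R by rewrite Heq.
  rewrite /P hornerM horner_exp hornerXsubC abszM abszX.
  apply: dvdn_mulr; rewrite -(subnKC he) expnS dvdn_mulr //.
have Exa : (x - a = V%:Z * R.@[fun i => (v i)%:Z])%R by rewrite Ex -EV addrK.
have VMp : V %| Mp.
  by apply: dvdn_trans HxP; rewrite Exa abszM dvdn_mulr.
have VF : V %| F := dvdn_trans VMp MpF.
set w := ((4 ^ k.-1 * 2 ^ (2 * r * l.-1)) ^ N)%N.
have Hvw : forall i, v i <= w.
  move=> i; have [y [z [[y0 yK] [[z0 zO] Evi]]]] := hv i.
  have viF : v i %| F by apply: dvdn_trans VF; rewrite /V (bigD1 i) //= dvdn_mulr.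
  have yF : y %| F by apply: dvdn_trans viF; rewrite Evi dvdn_mulr.
  have zF : z %| F by apply: dvdn_trans viF; rewrite Evi dvdn_mull.
  have Hy : y <= (4 ^ N) ^ k.-1.
    apply: y_bound => // p; rewrite mem_primes => /and3P[pp _ pd].
    exact: HFp pp (dvdn_trans pd yF).
  have Hz : z <= (2 ^ (N * (2 * r))) ^ l.-1 by apply: z_bound zF z0 zO.
  rewrite Evi /w expnMn; apply: leq_mul.
    by apply: leq_trans Hy _; rewrite -!expnM mulnC.
  by apply: leq_trans Hz _; rewrite -!expnM; apply: eq_leq; congr (2 ^ _); ring.
have HVw : V <= w ^ m.
  by rewrite /V -[m in w ^ m]card_ord -prod_nat_const; apply: leq_prod => i _.
have HMpV : Mp <= Cn * V ^ K.
  have H1 : (Mp%:Z <= SP * (`|x| + 1) ^+ dP)%R.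
    rewrite -Heq; apply: le_trans (ler_norm _) _; exact: poly_bound.
  have Hy1 : (1 <= V%:Z ^+ T.+1)%R.
    by apply: exprn_ege1; rewrite lez_nat.
  have HR := @mpoly_bound m R v v0; rewrite -/SR -/T -/V in HR.
  have SR0 : (0 <= SR)%R by apply: sumr_ge0 => ? _.
  have Hx : (`|x| <= SR * V%:Z ^+ T.+1 + `|a|)%R.
    have -> : x = (V%:Z * R.@[fun i => (v i)%:Z] + a)%R by rewrite Ex EV.
    apply: le_trans (ler_normD _ _) _; rewrite lerD2r normrM exprS.
    by rewrite ger0_norm // mulrCA; apply: ler_wpM2l.
  have Hx1 : (`|x| + 1 <= C1 * V%:Z ^+ T.+1)%R.
    by apply: x1_bound.
  have SP0 : (0 <= SP)%R by apply: sumr_ge0 => ? _.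
  have C10 : (0 <= C1)%R by rewrite /C1 addr_ge0 // addr_ge0.
  have H2 : ((`|x| + 1) ^+ dP <= (C1 * V%:Z ^+ T.+1) ^+ dP)%R.
    by apply: lerXn2r; rewrite ?nnegrE ?addr_ge0 // mulr_ge0 // exprn_ge0.
  have H3 : (Mp%:Z <= (SP * C1 ^+ dP) * V%:Z ^+ K)%R.
    apply: le_trans H1 _; rewrite -mulrA /K exprM -exprMn.
    by apply: ler_wpM2l.
  have ECn : ((Cn : int) = SP * C1 ^+ dP)%R.
    by rewrite /Cn gez0_abs // mulr_ge0 // exprn_ge0.
  by move: H3; rewrite -ECn -!natz -natrX -natrM ler_nat.
have HNN0 : N <= N0.
  apply: HN0; apply: leq_trans Hlow _; apply: leq_trans HMpV _.
  rewrite leq_mul // /E.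
  apply: leq_trans (leq_expl _ _ K HVw) _.
  by rewrite /w -!expnM; apply: eq_leq; congr (_ ^ _); ring.
apply: allpairs_f.
  apply/mapP; exists [ffun i => inord (n i)]; first by rewrite mem_enum.
  apply/ffunP => i; rewrite !ffunE inordK //; rewrite ltnS.
  exact: leq_trans (HnN i) HNN0.
have Hxa : absz (x - a) <= XB.
  apply: leq_trans (dvdn_leq Mp0 HxP) _.
  apply: leq_trans (dvdn_leq F0 MpF) _.
  by rewrite /F /XB leq_expl // leq_fact.
have [Hi Hd] := int_window _ _ Hxa.
apply/mapP; exists (absz (x - a + XB%:Z)%R); first by rewrite mem_iota.
by rewrite -Hd; ring.
Qed.
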